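(* Let $m\ge2$ be even and $n\ge 2$. If $\mathcal{C}_1$ and $\mathcal{C}_2$ are positive semi-definite Cauchy tensors of order $m$ and dimension $n$, then their Hadamard product $\mathcal{C}_1\circ\mathcal{C}_2$ is positive semi-definite.
   Context: The Cauchy tensor with generating vector $c\in\mathbb{R}^n$ (with all sums $c_{i_1}+\cdots+c_{i_m}\neq0$) has entries $\frac{1}{c_{i_1}+\cdots+c_{i_m}}$, $i_j\in\{1,\dots,n\}$. The Hadamard product of tensors $\mathcal{A}=(a_{i_1\cdots i_m})$, $\mathcal{B}=(b_{i_1\cdots i_m})$ is $\mathcal{A}\circ\mathcal{B}=(a_{i_1\cdots i_m}b_{i_1\cdots i_m})$. A tensor $\mathcal{A}$ of even order is positive semi-definite if $\sum_{i_1,\dots,i_m}a_{i_1\cdots i_m}x_{i_1}\cdots x_{i_m}\ge0$ for all $x\in\mathbb{R}^n$. *)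

(* Defs.v *)
From HB Require Import structures.
From mathcomp Require Import all_boot all_order all_algebra.
Set Implicit Arguments. Unset Strict Implicit. Unset Printing Implicit Defensive.
Import Order.TTheory GRing.Theory Num.Theory.
Local Open Scope ring_scope.

(* A real tensor of order m and dimension n: entries indexed by
   (i_1,...,i_m) in {0..n-1}^m, represented as finite functions 'I_m -> 'I_n. *)
Definition tensor (R : Type) (m n : nat) := {ffun 'I_m -> 'I_n} -> R.

Definition cauchy_tensor (R : realFieldType) (m n : nat) (c : 'I_n -> R)
  : tensor R m n := fun idx => (\sum_(j < m) c (idx j))^-1.

Definition is_cauchy_tensor (R : realFieldType) (m n : nat) (A : tensor R m n) :=
  exists c : 'I_n -> R,
    (forall idx : {ffun 'I_m -> 'I_n}, \sum_(j < m) c (idx j) != 0) /\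
    A = cauchy_tensor c.

Definition tensor_form (R : realFieldType) (m n : nat) (A : tensor R m n)
  (x : 'I_n -> R) : R :=
  \sum_(idx : {ffun 'I_m -> 'I_n}) A idx * \prod_(j < m) x (idx j).

Definition psd_tensor (R : realFieldType) (m n : nat) (A : tensor R m n) :=
  forall x : 'I_n -> R, 0 <= tensor_form A x.

Definition hadamard (R : realFieldType) (m n : nat) (A B : tensor R m n)
  : tensor R m n := fun idx => A idx * B idx.

(* Main.v *)
Require Import Defs.
From HB Require Import structures.
From mathcomp Require Import all_boot all_order all_algebra.
From mathcomp Require Import ring lra.
Import Order.TTheory GRing.Theory Num.Theory.
Local Open Scope ring_scope.

Section Core.
Variable R : realFieldType.

Lemma supp_ind (I : finType) (P : (I -> R) -> Prop) :
  (forall z, (forall i, z i = 0) -> P z) ->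
  (forall z i0, z i0 != 0 ->
     (forall w, (forall i, z i = 0 -> w i = 0) -> w i0 = 0 -> P w) -> P z) ->
  forall z, P z.
Proof.
move=> H0 HS z.
have [N] := ubnP #|[set i | z i != 0]|.
elim: N z => [|N IH] z //.
move=> hN.
case: (boolP [exists i, z i != 0]) => [/existsP [i0 hi0]|/existsPn hall].
  apply: (HS z i0 hi0) => w hw hw0; apply: IH.
  rewrite -ltnS; apply: (leq_trans _ hN); rewrite ltnS; apply: proper_card.
  apply/properP; split.
    apply/subsetP => i; rewrite !inE => hi; apply/negP => /eqP hz.
    by move: hi; rewrite hw ?eqxx.
  by exists i0; rewrite !inE ?hi0 ?hw0 ?eqxx.
by apply: H0 => i; move: (hall i); rewrite negbK => /eqP.
Qed.

Lemma sum_sq (I : finType) (a : I -> R) :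
  \sum_i \sum_j a i * a j = (\sum_i a i) ^+ 2.
Proof.
rewrite expr2 mulr_suml; apply: eq_bigr => i _; by rewrite mulr_sumr.
Qed.

Lemma cauchy_psd (I : finType) (p : I -> R) (hp : forall i, 0 < p i) (z : I -> R) :
  0 <= \sum_i \sum_j z i * z j / (p i + p j).
Proof.
elim/supp_ind: z => [z hz | z i0 hi0 IH].
  by rewrite big1 // => i _; rewrite big1 // => j _; rewrite hz !mul0r.
pose D i := (p i - p i0) / (p i + p i0).
pose a i := z i / (p i + p i0).
have e : forall i j, z i * z j / (p i + p j) =
   (2 * p i0) * (a i * a j) + (z i * D i) * (z j * D j) / (p i + p j).
  move=> i j; rewrite /a /D.
  have := hp i; have := hp j; have := hp i0 => h0 hj hi.
  field; rewrite ?lt0r_neq0 //; lra.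
under eq_bigr => i _ do under eq_bigr => j _ do rewrite e.
under eq_bigr => i _ do rewrite big_split /=.
rewrite big_split /=; apply: addr_ge0.
  under eq_bigr => i _ do rewrite -mulr_sumr.
  rewrite -mulr_sumr sum_sq; apply: mulr_ge0; last exact: sqr_ge0.
  have := hp i0; lra.
apply: IH => [i ->|]; first by rewrite mul0r.
by rewrite /D subrr mul0r mulr0.
Qed.

Lemma prod_psd (I : finType) (p q : I -> R) (hp : forall i, 0 < p i)
  (hq : forall i, 0 < q i) (z : I -> R) :
  0 <= \sum_i \sum_j z i * z j / ((p i + p j) * (q i + q j)).
Proof.
elim/supp_ind: z => [z hz | z i0 hi0 IH].
  by rewrite big1 // => i _; rewrite big1 // => j _; rewrite hz !mul0r.
pose D i := (p i - p i0) / (p i + p i0).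
pose a i := z i / (p i + p i0).
have e : forall i j, z i * z j / ((p i + p j) * (q i + q j)) =
   (2 * p i0) * (a i * a j / (q i + q j)) +
   (z i * D i) * (z j * D j) / ((p i + p j) * (q i + q j)).
  move=> i j; rewrite /a /D.
  have := hp i; have := hp j; have := hp i0 => h0 hj hi.
  have := hq i; have := hq j => hqj hqi.
  field; rewrite ?mulf_neq0 ?lt0r_neq0 //; lra.
under eq_bigr => i _ do under eq_bigr => j _ do rewrite e.
under eq_bigr => i _ do rewrite big_split /=.
rewrite big_split /=; apply: addr_ge0.
  under eq_bigr => i _ do rewrite -mulr_sumr.
  rewrite -mulr_sumr; apply: mulr_ge0; last exact: cauchy_psd.
  have := hp i0; lra.
apply: IH => [i ->|]; first by rewrite mul0r.
by rewrite /D subrr mul0r mulr0.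
Qed.

End Core.

Section Tensor.
Variable R : realFieldType.

Lemma cauchy_pos (m n : nat) (hm : (0 < m)%N) (c : 'I_n -> R)
  (hc : forall idx : {ffun 'I_m -> 'I_n}, \sum_(j < m) c (idx j) != 0)
  (hpsd : psd_tensor (cauchy_tensor (m:=m) c)) : forall i, 0 < c i.
Proof.
move=> i.
have := hpsd (fun l => (l == i)%:R); rewrite /tensor_form.
rewrite (bigD1 [ffun=> i]) //= [X in _ + X]big1; last first.
  move=> idx hidx.
  case: (boolP [forall j, idx j == i]) => [/forallP H | /forallPn [j Hj]].
    exfalso; move/eqP: hidx; apply; apply/ffunP => j; rewrite ffunE; exact/eqP/H.
  by rewrite (bigD1 j) //= (negbTE Hj) mul0r mulr0.
rewrite addr0 big1 ?mulr1; last by move=> j _; rewrite ffunE eqxx.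
have := hc [ffun=> i].
rewrite /cauchy_tensor.
under eq_bigr => j _ do rewrite ffunE.
rewrite sumr_const card_ord invr_ge0 => hne hge.
by rewrite -(pmulrn_lgt0 _ hm) lt_def hne hge.
Qed.

Definition joinf k n (ab : {ffun 'I_k -> 'I_n} * {ffun 'I_k -> 'I_n})
  : {ffun 'I_(k + k) -> 'I_n} :=
  [ffun i => match split i with inl j => ab.1 j | inr j => ab.2 j end].

Definition splitf k n (f : {ffun 'I_(k + k) -> 'I_n}) :=
  ([ffun j => f (lshift k j)], [ffun j => f (rshift k j)]).

Lemma joinf_l k n ab j : @joinf k n ab (lshift k j) = ab.1 j.
Proof. by rewrite ffunE (unsplitK (inl j)). Qed.
Lemma joinf_r k n ab j : @joinf k n ab (rshift k j) = ab.2 j.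
Proof. by rewrite ffunE (unsplitK (inr j)). Qed.

Lemma joinf_bij k n : bijective (@joinf k n).
Proof.
exists (@splitf k n).
  by case=> a b; rewrite /splitf; congr pair; apply/ffunP => j;
     rewrite ffunE ?joinf_l ?joinf_r.
move=> f; apply/ffunP => i; rewrite ffunE.
by case: split_ordP => j ->; rewrite /= ffunE.
Qed.

Lemma main_even (k n : nat) (hk : (0 < k)%N) (c d : 'I_n -> R)
  (hc : forall i, 0 < c i) (hd : forall i, 0 < d i) (x : 'I_n -> R) :
  0 <= tensor_form (hadamard (cauchy_tensor (m:=k+k) c) (cauchy_tensor d)) x.
Proof.
rewrite /tensor_form /hadamard /cauchy_tensor.
rewrite (reindex (@joinf k n)); last first.
  by apply: onW_bij; apply: joinf_bij.
have pos : forall (e : 'I_n -> R), (forall i, 0 < e i) ->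
    forall a : {ffun 'I_k -> 'I_n}, 0 < \sum_(j < k) e (a j).
  move=> e he a; case: k hk a => // k' _ a.
  rewrite big_ord_recl; have := he (a ord0).
  have : 0 <= \sum_(i < k') e (a (lift ord0 i)) by apply: sumr_ge0 => i _; apply/ltW.
  lra.
pose P (a : {ffun 'I_k -> 'I_n}) := \sum_(j < k) c (a j).
pose Q (a : {ffun 'I_k -> 'I_n}) := \sum_(j < k) d (a j).
pose z (a : {ffun 'I_k -> 'I_n}) := \prod_(j < k) x (a j).
have := @prod_psd R _ P Q (pos c hc) (pos d hd) z.
rewrite pair_bigA /=.
move=> H; apply: (le_trans H); rewrite le_eqVlt; apply/orP; left; apply/eqP.
apply: eq_bigr => [[a b]] _ /=.
rewrite !big_split_ord /=.
have hs : forall (F : 'I_n -> R), \sum_(i<k) F (joinf k n (a,b) (lshift k i)) = \sum_(i<k) F (a i).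
  by move=> F; apply: eq_bigr => i _; rewrite joinf_l.
have hs' : forall (F : 'I_n -> R), \sum_(i<k) F (joinf k n (a,b) (rshift k i)) = \sum_(i<k) F (b i).
  by move=> F; apply: eq_bigr => i _; rewrite joinf_r.
have hp : \prod_(i<k) x (joinf k n (a,b) (lshift k i)) = z a.
  by apply: eq_bigr => i _; rewrite joinf_l.
have hp' : \prod_(i<k) x (joinf k n (a,b) (rshift k i)) = z b.
  by apply: eq_bigr => i _; rewrite joinf_r.
rewrite (hs c) (hs d) (hs' c) (hs' d) hp hp' -/(P a) -/(P b) -/(Q a) -/(Q b).
rewrite invfM; ring.
Qed.

End Tensor.

Theorem corollary3p2 (R : realFieldType) (m n : nat)
  (hm : (2 <= m)%N) (hmeven : ~~ odd m) (hn : (2 <= n)%N)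
  (C1 C2 : tensor R m n) :
  is_cauchy_tensor C1 -> is_cauchy_tensor C2 ->
  psd_tensor C1 -> psd_tensor C2 ->
  psd_tensor (hadamard C1 C2).
Proof.
move=> [c [hc ->]] [d [hd ->]] p1 p2.
have cpos := @cauchy_pos R m n (ltnW hm) _ hc p1.
have dpos := @cauchy_pos R m n (ltnW hm) _ hd p2.
have hk : m = (m./2 + m./2)%N.
  by rewrite addnn -[LHS]odd_double_half (negbTE hmeven).
have hk0 : (0 < m./2)%N.
  by rewrite lt0n; apply/eqP => h; move: hm; rewrite hk h.
move: (m./2) hk hk0 c d hc hd p1 p2 cpos dpos => k -> hk0 c d _ _ _ _ cpos dpos x.
exact: main_even.
Qed.
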